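(* Let $T$ be a continuous linear operator on a topological vector space $X$ and let $\mathcal F$ be a block family. Then $T$ is $\mathcal F$-hypercyclic if and only if $T$ is hypercyclic and has the $\mathscr P_{\mathcal F}$ property.
   Context: $\mathbb N$ denotes the nonnegative integers. A Furstenberg family is a nonempty collection $\mathcal F\subseteq\mathcal P(\mathbb N)$ with $\emptyset\notin\mathcal F$ which is hereditarily upward ($A\in\mathcal F$, $A\subseteq B$ imply $B\in\mathcal F$). The block family $b\mathcal F$: $S\in b\mathcal F$ iff there is $F\in\mathcal F$ such that for every finite $R\subseteq F$ there is $n\in\mathbb N$ with $R+n\subseteq S$. A Furstenberg family $\mathcal F$ is called a block family if $b\mathcal F=\mathcal F$. For $x\in X$ and $U\subseteq X$, $N_T(x,U)=\{n\in\mathbb N:T^nx\in U\}$. $T$ is $\mathcal F$-hypercyclic if there is $x\in X$ with $N_T(x,U)\in\mathcal F$ for every nonempty open $U$; $T$ is hypercyclic if some $x$ has dense orbit $\{T^nx:n\in\mathbb N\}$. $T$ has the $\mathscr P_{\mathcal F}$ property if for every nonempty open set $U\subseteq X$ there is $x\in X$ with $N_T(x,U)\in\mathcal F$. *)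

(* Defs.v *)
From HB Require Import structures.
From mathcomp Require Import all_boot all_order all_algebra.
From mathcomp Require Import all_classical all_reals all_analysis.
Set Implicit Arguments. Unset Strict Implicit. Unset Printing Implicit Defensive.
Import Order.TTheory GRing.Theory Num.Theory.
Local Open Scope classical_set_scope.

Definition furstenberg_family (F : set (set nat)) : Prop :=
  [/\ F !=set0, ~ F set0 & forall A B, F A -> A `<=` B -> F B].

Definition block_of (F : set (set nat)) : set (set nat) :=
  [set S | exists2 G, F G &
     forall R : set nat, finite_set R -> R `<=` G ->
       exists n : nat, [set (r + n)%N | r in R] `<=` S].

Definition block_family (F : set (set nat)) : Prop :=
  furstenberg_family F /\ block_of F = F.

Definition return_set (X : Type) (T : X -> X) (x : X) (U : set X) : set nat :=
  [set n | U (iter n T x)].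

Definition F_hypercyclic (X : topologicalType) (F : set (set nat)) (T : X -> X) :=
  exists x : X, forall U : set X, open U -> U !=set0 -> F (return_set T x U).

Definition hypercyclic (X : topologicalType) (T : X -> X) :=
  exists x : X, dense (range (fun n : nat => iter n T x)).

Definition P_property (X : topologicalType) (F : set (set nat)) (T : X -> X) :=
  forall U : set X, open U -> U !=set0 -> exists x : X, F (return_set T x U).

(* Main.v *)
Require Import Defs.
From HB Require Import structures.
From mathcomp Require Import all_boot all_order all_algebra.
From mathcomp Require Import all_classical all_reals all_analysis.
Import Order.TTheory GRing.Theory Num.Theory.
Local Open Scope classical_set_scope.

Lemma iter_cont (X : topologicalType) (f : X -> X) :
  continuous f -> forall n, continuous (iter n f).
Proof.
move=> fc; elim=> [|n IH] /= x; first exact: cvg_id.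
exact: (continuous_comp (IH x) (fc _)).
Qed.

Lemma open_seq (X : topologicalType) (f : X -> X) (U : set X) :
  continuous f -> open U -> forall s : seq nat,
  open [set z | forall r, r \in s -> U (iter r f z)].
Proof.
move=> fc oU; elim=> [|a s IH].
  have -> : [set z : X | forall r, r \in [::] -> U (iter r f z)] = setT.
    by apply/seteqP; split => // z _ r.
  exact: openT.
have -> : [set z | forall r, r \in a :: s -> U (iter r f z)] =
   (iter a f @^-1` U) `&` [set z | forall r, r \in s -> U (iter r f z)].
  apply/seteqP; split => z /=.
    by move=> H; split; [apply: H; rewrite inE eqxx|move=> r rs; apply: H; rewrite inE rs orbT].
  by move=> [Ha Hs] r; rewrite inE => /orP [/eqP ->|]; [|apply: Hs].
apply: openI => //; apply: open_comp => //= x _; exact: iter_cont.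
Qed.

Theorem mainTheorem4 (K : numFieldType) (X : topologicalLmodType K)
  (T : {linear X -> X}) (F : set (set nat)) :
  continuous T -> block_family F ->
  (F_hypercyclic F T <-> hypercyclic T /\ P_property F T).
Proof.
move=> Tc [[_ F0 Fup] bF]; split.
  move=> [x Hx]; split.
    exists x => O O0 oO.
    have HO := Hx O oO O0.
    have [n On] : return_set T x O !=set0.
      by apply/set0P/eqP => E; apply: F0; rewrite -E.
    by exists (iter n T x); split => //; exists n.
  by move=> U oU U0; exists x; exact: Hx.
move=> [[x dx] HP]; exists x => U oU U0.
have [y Fy] := HP U oU U0.
rewrite -bF; exists (return_set T y U) => // R fR RG.
set s : seq nat := finmap.enum_fset (fset_set R).
have Rs : forall r, R r <-> r \in s.
  move=> r; have := in_fset_set fR r; move=> E; split.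
    by move=> rR; move: E; rewrite (mem_set rR); exact.
  by move=> rs; apply/set_mem; rewrite -E; exact: rs.
have oV := @open_seq _ T U Tc oU s.
have [z [Vz [n _ Ez]]] : [set z | forall r, r \in s -> U (iter r T z)]
    `&` range (fun n => iter n T x) !=set0.
  apply: dx => //; exists y => r /Rs rR; exact: RG.
subst z; exists n => _ [r rR <-]; rewrite /return_set /= iterD.
by apply: Vz; apply/Rs.
Qed.
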